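(* Let $(a_{i,j})_{i,j\in\mathbb{N}}$ and $(b_{i,j})_{i,j\in\mathbb{N}}$ be arbitrary real numbers, and let $(T(n,k))_{n\ge 0,\,k\in\mathbb{Z}}$ be defined by $T(0,0)=1$, $T(n,k)=0$ whenever $k<0$ or $k>n$, and \[ T(n,k)=a_{n,k}\,T(n-1,k)+b_{n,k}\,T(n-1,k-1)\qquad (n\ge 1). \] Then for all integers $0\le k\le n$, \[ T(n,k)=\sum_{\sigma\in\mathcal{C}^\uparrow(k,n)}\ \prod_{i=1}^{n-k} a_{\tilde\sigma_i,\ \tilde\sigma_i-i}\ \prod_{i=1}^{k} b_{\sigma(i),\ i}. \]
   Context: $[n]=\{1,\dots,n\}$. $\mathcal{C}^\uparrow(k,n)$ is the set of strictly increasing functions $\sigma:[k]\to[n]$. For $\sigma\in\mathcal{C}^\uparrow(k,n)$, $(\tilde\sigma_1<\tilde\sigma_2<\cdots<\tilde\sigma_{n-k})$ denotes the increasing list of the elements of $[n]\setminus\sigma([k])$. Empty products equal $1$. *)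

(* Defs.v *)
From HB Require Import structures.
From mathcomp Require Import all_boot all_order all_algebra.
From mathcomp Require Export reals.
Set Implicit Arguments. Unset Strict Implicit. Unset Printing Implicit Defensive.
Import Order.TTheory GRing.Theory Num.Theory.

(* C^up(k,n): strictly increasing functions [k] -> [n].  We index [k] by 'I_k
   (i : 'I_k stands for i+1 in [k]) and [n] by 'I_n (j : 'I_n stands for j+1). *)
Definition incr_funs (k n : nat) : {set {ffun 'I_k -> 'I_n}} :=
  [set s : {ffun 'I_k -> 'I_n} | [forall i : 'I_k, forall j : 'I_k, (i < j)%N ==> (s i < s j)%N]].

Definition sig1 (k n : nat) (s : {ffun 'I_k -> 'I_n}) (i : 'I_k) : nat := (s i).+1.

(* increasing list (tilde sigma_1 < ... < tilde sigma_{n-k}) of [n] \ sigma([k]) *)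
Definition compl_seq (k n : nat) (s : {ffun 'I_k -> 'I_n}) : seq nat :=
  [seq j <- iota 1 n | j \notin [seq sig1 s i | i : 'I_k]].

(* Main.v *)
Require Import Defs.
From HB Require Import structures.
From mathcomp Require Import all_boot all_order all_algebra.
From mathcomp Require Import reals.
From mathcomp Require Import zify.
Import Order.TTheory GRing.Theory Num.Theory.

Lemma sorted_rconsE (L : seq nat) x :
  sorted ltn (rcons L x) = sorted ltn L && all (fun y => y < x) L.
Proof.
elim: L => [|y L IH] //=.
rewrite !path_sortedE; last exact: ltn_trans; last exact: ltn_trans.
rewrite all_rcons IH /=.
by case: (y < x); case: (all _ L); case: (sorted _ L); case: (all (fun z => z < x) L).
Qed.

Fixpoint S (n k : nat) : seq (seq nat) :=
  match n with
  | 0 => if k is 0 then [:: [::]] else [::]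
  | n'.+1 => match k with
             | 0 => [:: [::]]
             | k'.+1 => S n' k ++ map (fun L => rcons L n) (S n' k')
             end
  end.

Definition P (n k : nat) (L : seq nat) :=
  [&& sorted ltn L, size L == k & all (fun x => 0 < x <= n) L].

Lemma memS n k L : (L \in S n k) = P n k L.
Proof.
elim: n k L => [|n IH] [|k] L /=.
- rewrite inE /P; case: L => [|x L] //=; by rewrite andbF.
- rewrite /P; case: L => [|x L] //=; case: x => [|x] /=; by rewrite !andbF.
- rewrite inE /P; case: L => [|x L] //=; by rewrite andbF.
- rewrite mem_cat IH.
  case/lastP: L => [|L x].
  + rewrite /P /=; apply/negbTE/mapP => -[L' _] /eqP; by rewrite eq_sym -size_eq0 size_rcons.
  + have -> : (rcons L x \in [seq rcons L0 n.+1 | L0 <- S n k]) = (x == n.+1) && P n k L.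
      apply/mapP/andP.
      * move=> [L' HL' E]. have := E; move/(congr1 (last 0)); rewrite !last_rcons => ->.
        by move/rcons_inj: E => [-> _]; rewrite -IH.
      * by move=> [/eqP -> HL]; exists L => //; rewrite IH.
    rewrite /P sorted_rconsE size_rcons !all_rcons eqSS.
    have [-> | /eqP xn] := eqVneq x n.+1; rewrite /=.
    * apply/idP/idP.
      -- case/orP => [/and4P [_ _ H _]|/and3P [H1 H2 H3]]; first lia.
         apply/and4P; split; [rewrite H1 /=| by [] | lia | ];
         apply/allP => y Hy; move/allP: H3 => /(_ y Hy); lia.
      -- move/and4P => [/andP [H1 H2] H3 _ H4]; apply/orP; right; rewrite H1 H3 /=.
         apply/allP => y Hy; move/allP: H2 => /(_ y Hy); move/allP: H4 => /(_ y Hy); lia.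
    * rewrite orbF; apply/idP/idP.
      -- move/and4P => [/andP[H1 H2] H3 H4 H5]; apply/and4P; split; [by rewrite H1 H2 | by [] | lia | ].
         apply/allP => y Hy; move/allP: H5 => /(_ y Hy); lia.
      -- move/and4P => [/andP[H1 H2] H3 H4 H5]; have xn' : x <= n by lia.
         apply/and4P; split; [by rewrite H1 H2 | by [] | lia | ].
         apply/allP => y Hy; move/allP: H5 => /(_ y Hy); move/allP: H2 => /(_ y Hy); lia.
Qed.
Lemma S_nil n k : n < k -> S n k = [::].
Proof.
elim: n k => [|n IH] [|k] //= H.
by rewrite IH ?IH //; lia.
Qed.

Lemma S_0 n : S n 0 = [:: [::]].
Proof. by case: n. Qed.

Lemma uniqS n k : uniq (S n k).
Proof.
elim: n k => [|n IH] [|k] //=.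
rewrite cat_uniq IH map_inj_uniq ?IH ?andbT /=; last exact: rcons_injl.
apply/hasPn => L /mapP [L' _ ->]; rewrite memS /P all_rcons; lia.
Qed.

Definition compl n (L : seq nat) := [seq j <- iota 1 n | j \notin L].

Lemma size_compl {n k L} : P n k L -> size (compl n L) = n - k.
Proof.
move/and3P => [H1 /eqP H2 H3].
have := count_predC (mem L) (iota 1 n).
rewrite size_iota /compl size_filter.
have -> : count (mem L) (iota 1 n) = k.
  rewrite -size_filter -H2; apply: perm_size; apply: uniq_perm.
  - exact/filter_uniq/iota_uniq.
  - exact: sorted_uniq ltn_trans ltnn _ H1.
  move=> x /=; rewrite mem_filter mem_iota; apply/idP/idP => [/andP[]//|Hx].
  move/allP: H3 => /(_ x Hx) H; apply/and3P; split => //; lia.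
move=> E; have -> : n - k = count (predC (mem L)) (iota 1 n) by lia.
by apply: eq_count.
Qed.

Local Open Scope ring_scope.

Definition w {R : realType} (a b : nat -> nat -> R) n k L : R :=
  (\prod_(i < n - k) a (nth 0%N (compl n L) i) (nth 0%N (compl n L) i - i.+1)%N)
  * \prod_(i < k) b (nth 0%N L i) i.+1.

Lemma compl_succ n L : all (fun x => 0 < x <= n)%N L -> compl n.+1 L = rcons (compl n L) n.+1.
Proof.
move=> H; rewrite /compl -(addn1 n) iotaD filter_cat /= add1n -cats1; congr (_ ++ _).
rewrite addn1; case: ifP => // /negbFE Hn; move/allP: H => /(_ _ Hn); lia.
Qed.

Lemma compl_rcons n k L : P n k L -> compl n.+1 (rcons L n.+1) = compl n L.
Proof.
move/and3P => [_ _ H].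
rewrite /compl -(addn1 n) iotaD filter_cat /= add1n addn1 mem_rcons in_cons eqxx /= cats0.
apply: eq_in_filter => j; rewrite mem_iota mem_rcons in_cons => Hj.
have -> : (j == n.+1) = false by apply/eqP; lia.
by [].
Qed.

Lemma wA (R : realType) (a b : nat -> nat -> R) n k L :
  P n k L -> (k <= n)%N -> w a b n.+1 k L = a n.+1 k * w a b n k L.
Proof.
move=> HP Hk; have := HP; move/and3P => [_ _ H].
rewrite /w compl_succ // subSn // big_ord_recr /= nth_rcons (size_compl (n:=n) (k:=k) (L:=L) HP) ltnn eqxx.
have -> : (n.+1 - (n - k).+1)%N = k by lia.
rewrite mulrAC mulrC; congr (_ * (_ * _)).
apply: eq_bigr => i _; rewrite !nth_rcons (size_compl (n:=n) (k:=k) (L:=L) HP) ltn_ord; by [].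
Qed.

Lemma wB (R : realType) (a b : nat -> nat -> R) n k L :
  P n k L -> w a b n.+1 k.+1 (rcons L n.+1) = b n.+1 k.+1 * w a b n k L.
Proof.
move=> HP; have := HP; move/and3P => [_ /eqP Hs _].
rewrite /w (@compl_rcons n k L HP) subSS big_ord_recr /= nth_rcons Hs ltnn eqxx.
rewrite mulrA mulrC; congr (_ * (_ * _)).
apply: eq_bigr => i _; rewrite !nth_rcons Hs ltn_ord; by [].
Qed.

Lemma mainS (R : realType) (a b : nat -> nat -> R) (T : nat -> int -> R)
  (HT00 : T 0%N 0%Z = 1)
  (HTout : forall (n : nat) (k : int), (k < 0)%R \/ (n%:Z < k)%R -> T n k = 0)
  (HTrec : forall (n k : nat), (1 <= n)%N -> (k <= n)%N ->
     T n k%:Z = a n k * T n.-1 k%:Z + b n k * T n.-1 (k%:Z - 1)) :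
  forall (n k : nat), (k <= n)%N -> T n k%:Z = \sum_(L <- S n k) w a b n k L.
Proof.
elim => [|n IH] k Hk.
  have -> : k = 0%N by lia.
  by rewrite /= big_seq1 /w /= !big_ord0 mulr1 HT00.
rewrite HTrec //=.
case: k Hk => [|k] Hk.
  rewrite (HTout n (0%:Z - 1)); last by left.
  rewrite mulr0 addr0 IH // !S_0 !big_seq1 (@wA R a b n 0 [::]) //.
rewrite big_cat big_map /=.
have -> : (k.+1%:Z - 1 = k%:Z)%R by rewrite -addn1 PoszD addrK.
congr (_ + _).
  case: (ltnP n k.+1) => Hnk.
    rewrite S_nil // big_nil (HTout n k.+1) ?mulr0 //; right; rewrite ltz_nat //.
  rewrite IH // mulr_sumr big_seq [RHS]big_seq; apply: eq_bigr => L.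
  rewrite memS => HL; by rewrite wA.
rewrite IH // mulr_sumr big_seq [RHS]big_seq; apply: eq_bigr => L.
rewrite memS => HL; by rewrite wB.
Qed.

Definition phi {k n} (s : {ffun 'I_k -> 'I_n}) : seq nat := [seq sig1 s i | i : 'I_k].

Lemma nth_phi k n (s : {ffun 'I_k -> 'I_n}) i (Hi : (i < k)%N) :
  nth 0%N (phi s) i = sig1 s (Ordinal Hi).
Proof.
rewrite /phi (nth_map (Ordinal Hi)) ?size_enum_ord //.
by have := nth_ord_enum (Ordinal Hi) (Ordinal Hi) => /= ->.
Qed.

Lemma size_phi k n (s : {ffun 'I_k -> 'I_n}) : size (phi s) = k.
Proof. by rewrite /phi size_map size_enum_ord. Qed.

Lemma phi_inj k n : injective (@phi k n).
Proof.
move=> s t E; apply/ffunP => i; apply/val_inj.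
have := congr1 (fun L => nth 0%N L i) E => /=.
rewrite !(nth_phi _ _ _ _ (ltn_ord i)) /sig1 /=.
have -> : Ordinal (ltn_ord i) = i by apply/val_inj.
by case.
Qed.

Lemma mem_phi k n L : (L \in map (@phi k n) (enum (incr_funs k n))) = P n k L.
Proof.
apply/mapP/idP.
- move=> [s]; rewrite mem_enum inE => /forallP Hs ->.
  apply/and3P; split; last first.
  + apply/allP => x /mapP [i _ ->]; exact: ltn_ord.
  + by rewrite size_phi.
  apply/(sortedP 0%N) => i; rewrite size_phi => Hi.
  rewrite (nth_phi _ _ _ _ (ltnW Hi)) (nth_phi _ _ _ _ Hi) /sig1.
  by move/forallP: (Hs (Ordinal (ltnW Hi))) => /(_ (Ordinal Hi)) /implyP; apply.
- move=> HP; have := HP; move/and3P => [H1 /eqP H2 H3].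
  have Hb : forall i : 'I_k, ((nth 0%N L i).-1 < n)%N.
    move=> i; have Hi : nth 0%N L i \in L by apply: mem_nth; rewrite H2.
    move/allP: H3 => /(_ _ Hi); lia.
  have Hpos : forall i, (i < k)%N -> (0 < nth 0%N L i)%N.
    move=> i Hi'; have Hi : nth 0%N L i \in L by apply: mem_nth; rewrite H2.
    move/allP: H3 => /(_ _ Hi); lia.
  exists [ffun i => Ordinal (Hb i)].
  + rewrite mem_enum inE; apply/forallP => i; apply/forallP => j; apply/implyP => Hij.
    rewrite !ffunE /=.
    have := sorted_ltn_nth ltn_trans 0%N H1.
    move=> /(_ i j); rewrite !inE H2 !ltn_ord => /(_ isT isT Hij).
    have := Hpos _ (ltn_ord i); have := Hpos _ (ltn_ord j); lia.
  + apply: (@eq_from_nth _ 0%N); first by rewrite size_phi.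
    move=> i; rewrite H2 => Hi; rewrite (nth_phi _ _ _ _ Hi) /sig1 ffunE /=.
    have := Hpos _ Hi; lia.
Qed.

Theorem mainTheorem1 (R : realType) (a b : nat -> nat -> R) (T : nat -> int -> R)
  (HT00 : T 0%N 0%Z = 1)
  (HTout : forall (n : nat) (k : int), (k < 0)%R \/ (n%:Z < k)%R -> T n k = 0)
  (HTrec : forall (n k : nat), (1 <= n)%N -> (k <= n)%N ->
     T n k%:Z = a n k * T n.-1 k%:Z + b n k * T n.-1 (k%:Z - 1)) :
  forall (n k : nat), (k <= n)%N ->
    T n k%:Z =
      \sum_(s in incr_funs k n)
        (\prod_(i < n - k) a (nth 0%N (compl_seq s) i) (nth 0%N (compl_seq s) i - i.+1)%N)
        * (\prod_(i < k) b (sig1 s i) i.+1).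
Proof.
move=> n k Hk; rewrite (@mainS R a b T HT00 HTout HTrec n k Hk).
have E : forall s : {ffun 'I_k -> 'I_n},
  (\prod_(i < n - k) a (nth 0%N (compl_seq s) i) (nth 0%N (compl_seq s) i - i.+1)%N)
        * (\prod_(i < k) b (sig1 s i) i.+1) = w a b n k (phi s).
  move=> s; rewrite /w; congr (_ * _).
  apply: eq_bigr => i _; rewrite (nth_phi _ _ _ _ (ltn_ord i)).
  have -> : Ordinal (ltn_ord i) = i by apply/val_inj.
  by [].
rewrite (eq_bigr _ (fun s _ => E s)) -big_enum /=.
rewrite -(big_map phi xpredT (w a b n k)).
apply: perm_big; apply: uniq_perm.
- exact: uniqS.
- rewrite map_inj_uniq ?enum_uniq //; exact: phi_inj.
move=> L; by rewrite memS mem_phi.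
Qed.
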